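(* (i) Let $(s,p)\in R_{\Lambda,i}$. Then \[ \frac{\prod_{p'=1}^{i+1}L^{(s)}_{+,p'}}{\prod_{1\le p'\le i,\ p'\ne p}(\nu^{(s)}_{i,p}-\nu^{(s)}_{i,p'})}=\hbar'^2(p-i-1), \] and for $s'\ne s$, with $\Delta=a_s-a_{s'}$, \[ \frac{\prod_{p'=1}^{i+1}L^{(s')}_{+,p'}}{\prod_{p'=1}^{i}(\nu^{(s)}_{i,p}-\nu^{(s')}_{i,p'})}=\begin{cases}\hbar'(p-i-1)-\Delta&\text{if }l^{(s')}_{i+1}=l^{(s')}_i,\\ \hbar'(p-i)-\Delta&\text{if }l^{(s')}_{i+1}=l^{(s')}_i+1,\ l^{(s')}_i=i,\\ \dfrac{(\hbar'(p-l^{(s')}_i)-\Delta)(\hbar'(p-i-1)-\Delta)}{\hbar'(p-l^{(s')}_i-1)-\Delta}&\text{if }l^{(s')}_{i+1}=l^{(s')}_i+1,\ l^{(s')}_i\ne i.\end{cases} \] (ii) Let $(s,p)\in A_{\Lambda,i}$. Then \[ \frac{\prod_{p'=1}^{i-1}L^{(s)}_{-,p'}}{\prod_{1\le p'\le i,\ p'\ne p}(\nu^{(s)}_{i,p}-\nu^{(s)}_{i,p'})}=-\frac1{p-i-1}, \] and for $s'\ne s$, with $\Delta=a_s-a_{s'}$, \[ \frac{\prod_{p'=1}^{i-1}L^{(s')}_{-,p'}}{\prod_{p'=1}^{i}(\nu^{(s)}_{i,p}-\nu^{(s')}_{i,p'})}=\begin{cases}\dfrac1{\hbar'(p-i-1)-\Delta}&\text{if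 }l^{(s')}_{i-1}=l^{(s')}_i,\\ \dfrac1{\hbar'(p-i)-\Delta}&\text{if }l^{(s')}_{i-1}=l^{(s')}_i-1,\ l^{(s')}_i=i,\\ \dfrac{\hbar'(p-l^{(s')}_i-1)-\Delta}{(\hbar'(p-l^{(s')}_i)-\Delta)(\hbar'(p-i-1)-\Delta)}&\text{if }l^{(s')}_{i-1}=l^{(s')}_i-1,\ l^{(s')}_i\ne i.\end{cases} \]
   Context: Work over $\mathbb{C}(\varepsilon_1,\varepsilon_2)$ with $\hbar'=-(\varepsilon_1+\varepsilon_2)$, $t=N\varepsilon_2$, $N\ge2$. Fix $l\ge1$, integers $1\le p_1,\dots,p_l\le N$ and integers $r_1<\dots<r_l$, and set $a_s=tr_s+\hbar'(p_1+\cdots+p_s-\frac32)$. Let $\mathcal S$ be the set of collections of integers $\Lambda=(\lambda^{(s)}_{i,p})$, $1\le s\le l$, $1\le i\le N$, $1\le p\le i$, with $\lambda^{(s)}_{N,p}=1$ for $p\le p_s$ and $0$ for $p>p_s$, and $\lambda^{(s)}_{i,p}\ge\lambda^{(s)}_{i-1,p}\ge\lambda^{(s)}_{i,p+1}$ (so all entries are $0$ or $1$); put $\lambda^{(s)}_{i,p}=0$ for $p>i$. Let $l^{(s)}_i$ be the number of $p$ with $\lambda^{(s)}_{i,p}=1$. For $\Lambda\in\mathcal S$ and $1\le i\le N-1$, $\Lambda\pm\delta^{(s)}_{i,p}$ denotes $\Lambda$ with the $(s,i,p)$ entry changed by $\pm1$; $R_{\Lambda,i}=\{(s,p):\Lambda+\delta^{(s)}_{i,p}\in\mathcal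 S\}$, $A_{\Lambda,i}=\{(s,p):\Lambda-\delta^{(s)}_{i,p}\in\mathcal S\}$. Set $\nu^{(s)}_{i,p}=\hbar'(p-1-\lambda^{(s)}_{i,p})-a_s$, and for fixed $(s,i,p)$ and any $(s',p')$: $L^{(s')}_{+,p'}=\hbar'(p-p'+\lambda^{(s')}_{i+1,p'})-(a_s-a_{s'})$, $L^{(s')}_{-,p'}=\hbar'(p-p'-1+\lambda^{(s')}_{i-1,p'})-(a_s-a_{s'})$ (empty products are $1$). *)

(* Defs.v *)
(* Base field: C(eps1, eps2), realised as the field of
   fractions of the bivariate polynomial ring C[eps1][eps2], where C is
   the field of complex numbers  complex R  over Stdlib's reals R. *)
From HB Require Import structures.
From mathcomp Require Import all_boot all_order all_algebra.
From mathcomp Require Import fraction complex.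
From mathcomp Require Import Rstruct.
Set Implicit Arguments. Unset Strict Implicit. Unset Printing Implicit Defensive.
Import Order.TTheory GRing.Theory Num.Theory.
Local Open Scope ring_scope.

Definition Cx : fieldType := (Rdefinitions.R)[i].
Definition Kpoly : idomainType := {poly {poly Cx}}.
Definition K : fieldType := {fraction Kpoly}.

Definition eps1 : K := tofrac (('X : {poly Cx})%:P : Kpoly).
Definition eps2 : K := tofrac ('X : Kpoly).
Definition hbar' : K := - (eps1 + eps2).
Definition tpar (N : nat) : K := N%:R * eps2.

(* A collection Lambda = (lambda^{(s)}_{i,p}) is a function s i p |-> integer;
   only the entries with 1 <= p <= i matter, the others are 0 by convention. *)
Definition pattern := nat -> nat -> nat -> int.

Definition ent (L : pattern) (s i p : nat) : int :=
  if (1 <= p <= i)%N then L s i p else 0.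

Definition inS (N l : nat) (ps : nat -> nat) (L : pattern) : Prop :=
  forall s, (1 <= s <= l)%N ->
    (forall p, (1 <= p <= N)%N -> ent L s N p = (if (p <= ps s)%N then 1 else 0)) /\
    (forall i p, (2 <= i <= N)%N -> (1 <= p < i)%N ->
        ent L s (i.-1) p <= ent L s i p /\ ent L s i p.+1 <= ent L s (i.-1) p).

Definition shift (L : pattern) (s i p : nat) (d : int) : pattern :=
  fun s' i' p' => if [&& s' == s, i' == i & p' == p] then L s' i' p' + d
                  else L s' i' p'.

Definition lcnt (L : pattern) (s i : nat) : nat :=
  \sum_(1 <= p < i.+1) (ent L s i p == 1 :> int).

Definition aa (N : nat) (ps : nat -> nat) (r : nat -> int) (s : nat) : K :=
  tpar N * (r s)%:~R + hbar' * ((\sum_(1 <= k < s.+1) ps k)%:R - 3%:R / 2%:R).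

Definition nu N ps r (L : pattern) (s i p : nat) : K :=
  hbar' * (p%:R - 1 - (ent L s i p)%:~R) - aa N ps r s.

Definition Lplus N ps r (L : pattern) (s i p s' p' : nat) : K :=
  hbar' * (p%:R - p'%:R + (ent L s' i.+1 p')%:~R) - (aa N ps r s - aa N ps r s').
Definition Lminus N ps r (L : pattern) (s i p s' p' : nat) : K :=
  hbar' * (p%:R - p'%:R - 1 + (ent L s' i.-1 p')%:~R) - (aa N ps r s - aa N ps r s').

(* Main.v *)
Require Import Defs.
From HB Require Import structures.
From mathcomp Require Import all_boot all_order all_algebra.
From mathcomp Require Import fraction complex.
From mathcomp Require Import Rstruct.
From mathcomp Require Import ring lra zify.
Import Order.TTheory GRing.Theory Num.Theory.
Local Open Scope ring_scope.

Definition G (D : K) (z : int) : K := hbar' * z%:~R - D.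
Definition A (D : K) (c : int) (a b : nat) : K := \prod_(a <= j < b) G D (c - j%:Z).

Lemma A_nil D c a : A D c a a = 1.
Proof. by rewrite /A big_geq. Qed.

Lemma A_recr D c a b : (a <= b)%N -> A D c a b.+1 = A D c a b * G D (c - b%:Z).
Proof. by move=> h; rewrite /A big_nat_recr. Qed.

Lemma A_recl D c a b : (a < b)%N -> A D c a b = G D (c - a%:Z) * A D c a.+1 b.
Proof. by move=> h; rewrite /A big_ltn. Qed.

Lemma A_neq0 D c a b : (forall j, (a <= j < b)%N -> G D (c - j%:Z) != 0) -> A D c a b != 0.
Proof.
move=> h; rewrite /A prodf_seq_neq0; apply/allP => j; rewrite mem_index_iota => hj.
exact: h.
Qed.

Lemma prod_piece (F : nat -> K) D c a b k : (a <= k.+1 <= b)%N ->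
  (forall j, (a <= j < b)%N -> F j = G D (c - j%:Z + (if (j <= k)%N then 1 else 0))) ->
  \prod_(a <= j < b) F j = A D (c + 1) a k.+1 * A D c k.+1 b.
Proof.
move=> /andP[h1 h2] hF; rewrite (big_cat_nat h1 h2) /A; congr (_ * _);
  apply: eq_big_nat => j /andP[hj1 hj2].
  rewrite hF; last by apply/andP; split; lia.
  have -> : (j <= k)%N by lia.
  congr G; lia.
rewrite hF; last by apply/andP; split; lia.
have -> : (j <= k)%N = false by lia.
congr G; lia.
Qed.

Lemma prod_one (F : nat -> K) D c a b :
  (forall j, (a <= j < b)%N -> F j = G D (c - j%:Z)) ->
  \prod_(a <= j < b) F j = A D c a b.
Proof. by move=> hF; apply: eq_big_nat. Qed.

Lemma ratio (n d X : K) : d != 0 -> n = d * X -> n / d = X.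
Proof. by move=> hd ->; rewrite mulrC mulKf. Qed.

Lemma ratio2 (n d X Y : K) : d != 0 -> Y != 0 -> n * Y = d * X -> n / d = X / Y.
Proof. move=> hd hY h. apply/eqP; rewrite eqr_div // h; apply/eqP; ring. Qed.

Lemma caseI_other D (p i n m : nat) (Fn Fd : nat -> K) :
 (forall z, G D z != 0) -> (m <= i)%N -> (n <= i.+1)%N ->
 (forall j, (1 <= j < i.+2)%N -> Fn j = G D (p%:Z - j%:Z + (if (j <= n)%N then 1 else 0))) ->
 (forall j, (1 <= j < i.+1)%N -> Fd j = G D (p%:Z - j%:Z + (if (j <= m)%N then 1 else 0))) ->
 let q := (\prod_(1 <= j < i.+2) Fn j) / (\prod_(1 <= j < i.+1) Fd j) in
 [/\ n = m -> q = G D (p%:Z - i%:Z - 1),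
     n = m.+1 -> m = i -> q = G D (p%:Z - i%:Z) &
     n = m.+1 -> m <> i -> q = G D (p%:Z - m%:Z) * G D (p%:Z - i%:Z - 1) / G D (p%:Z - m%:Z - 1)].
Proof.
move=> hG hm hn hFn hFd q.
have hA : forall c a b, A D c a b != 0 by move=> *; apply: A_neq0 => *; apply: hG.
rewrite /q (prod_piece _ _ _ _ _ n _ hFn); last by lia.
rewrite (prod_piece _ _ _ _ _ m _ hFd); last by lia.
have hden : A D (p%:Z + 1) 1 m.+1 * A D p%:Z m.+1 i.+1 != 0 by rewrite mulf_neq0.
split.
- move=> ->; apply: ratio => //.
  rewrite (A_recr _ _ m.+1 i.+1); last by lia.
  have e : p%:Z - (i.+1)%:Z = p%:Z - i%:Z - 1 by timeout 10 lia.
  timeout 10 rewrite e.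
  by rewrite mulrA.
- move=> -> emi; subst m; apply: ratio => //.
  rewrite (A_recr _ _ 1 i.+1) // !A_nil.
  have e : p%:Z + 1 - (i.+1)%:Z = p%:Z - i%:Z by timeout 10 lia.
  timeout 10 rewrite e.
  by timeout 10 rewrite !mulr1.
- move=> -> nmi; apply: ratio2; [exact: hden | exact: hG | ].
  rewrite (A_recr _ _ 1 m.+1) //.
  rewrite (A_recr _ _ m.+2 i.+1); last by lia.
  rewrite (A_recl _ _ m.+1 i.+1); last by lia.
  have e1 : p%:Z + 1 - (m.+1)%:Z = p%:Z - m%:Z by timeout 10 lia.
  have e2 : p%:Z - (i.+1)%:Z = p%:Z - i%:Z - 1 by timeout 10 lia.
  have e3 : p%:Z - (m.+1)%:Z = p%:Z - m%:Z - 1 by timeout 10 lia.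
  timeout 10 rewrite e1 e2 e3.
  timeout 30 ring.
Qed.

Lemma caseII_other D (p i n m : nat) (Fn Fd : nat -> K) :
 (forall z, G D z != 0) -> (m <= i)%N -> (n < i)%N ->
 (forall j, (1 <= j < i)%N -> Fn j = G D (p%:Z - 1 - j%:Z + (if (j <= n)%N then 1 else 0))) ->
 (forall j, (1 <= j < i.+1)%N -> Fd j = G D (p%:Z - 1 - j%:Z + (if (j <= m)%N then 1 else 0))) ->
 let q := (\prod_(1 <= j < i) Fn j) / (\prod_(1 <= j < i.+1) Fd j) in
 [/\ n = m -> q = 1 / G D (p%:Z - i%:Z - 1),
     n = m.-1 -> (1 <= m)%N -> m = i -> q = 1 / G D (p%:Z - i%:Z) &
     n = m.-1 -> (1 <= m)%N -> m <> i -> q = G D (p%:Z - m%:Z - 1) / (G D (p%:Z - m%:Z) * G D (p%:Z - i%:Z - 1))].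
Proof.
move=> hG hm hn hFn hFd q.
have hA : forall c a b, A D c a b != 0 by move=> *; apply: A_neq0 => *; apply: hG.
rewrite /q (prod_piece _ _ _ _ _ n _ hFn); last by lia.
rewrite (prod_piece _ _ _ _ _ m _ hFd); last by lia.
have e0 : p%:Z - 1 + 1 = p%:Z by lia.
rewrite !e0.
have hden : A D p%:Z 1 m.+1 * A D (p%:Z - 1) m.+1 i.+1 != 0 by rewrite mulf_neq0.
split.
- move=> enm; subst n; apply: ratio2; [exact: hden | exact: hG | ].
  rewrite (A_recr _ _ m.+1 i); last by lia.
  have e : p%:Z - 1 - i%:Z = p%:Z - i%:Z - 1 by lia.
  rewrite e; ring.
- move=> en hm1 emi; subst m; have -> : n = i.-1 by lia.
  destruct i as [|k]; first by lia.
  have -> : k.+1.-1 = k by [].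
  apply: ratio2; [exact: hden | exact: hG | ].
  rewrite (A_recr _ _ 1 k.+1) // !A_nil.
  have e : p%:Z - (k.+1)%:Z = p%:Z - (k.+1)%:Z by [].
  ring.
- move=> en hm1 nmi; have em : m = n.+1 by lia.
  subst m; apply: ratio2; [exact: hden | apply: mulf_neq0; apply: hG | ].
  rewrite (A_recr _ _ 1 n.+1) //.
  rewrite (A_recr _ _ n.+2 i); last by lia.
  rewrite (A_recl _ _ n.+1 i); last by lia.
  have e1 : p%:Z - 1 - (n.+1)%:Z = p%:Z - (n.+1)%:Z - 1 by lia.
  have e2 : p%:Z - 1 - i%:Z = p%:Z - i%:Z - 1 by lia.
  rewrite e1 e2.
  ring.
Qed.

Lemma Cx_intr_eq0 (a : int) : (a%:~R : Cx) = 0 -> a = 0.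
Proof.
move=> h. have h' : (a%:~R : (Rdefinitions.R)[i]) = 0 := h.
by move/eqP: h'; rewrite intr_eq0 => /eqP.
Qed.

Lemma eps_indep (a b : int) : a%:~R * eps1 + b%:~R * eps2 = 0 -> a = 0 /\ b = 0.
Proof.
have hi : forall z : int, (z%:~R : K) = tofrac (z%:~R : Kpoly) by move=> z; rewrite rmorph_int.
rewrite /eps1 /eps2 !hi -!tofracM -tofracD => /eqP; rewrite tofrac_eq0 => /eqP h.
have h1 := congr1 (fun q : Kpoly => q`_1) h.
have h0 := congr1 (fun q : Kpoly => q`_0) h.
move: h0 h1 => /=. rewrite !mulrzl !coefD !coef0 !coefMrz !coefC !coefX /=.
rewrite !mul0rz addr0 add0r => h0 h1.
have hb : b = 0. apply: Cx_intr_eq0. have := congr1 (fun q : {poly Cx} => q`_0) h1. by rewrite /= coefMrz coefC coef0.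
have h2 := congr1 (fun q : {poly Cx} => q`_1) h0.
move: h2 => /=. rewrite coefMrz coefX coef0 => h2. split=> //. by apply: Cx_intr_eq0.
Qed.

Lemma intrK_neq0 (z : int) : z != 0 -> (z%:~R : K) != 0.
Proof.
move=> hz; apply/eqP => h.
have : z%:~R * eps1 + 0%:~R * eps2 = 0 by rewrite h; ring.
by move/eps_indep => [h1 _]; move: hz; rewrite h1.
Qed.

Lemma hbar_neq0 : hbar' != 0.
Proof.
apply/eqP => h.
have : (-1)%:~R * eps1 + (-1)%:~R * eps2 = 0 by move: h; rewrite /hbar' => h; rewrite -[RHS]h; ring.
by move/eps_indep => [].
Qed.

Lemma G0_neq0 D z : D = 0 -> z != 0 -> G D z != 0.
Proof. by move=> -> hz; rewrite /G subr0 mulf_neq0 ?hbar_neq0 ?intrK_neq0. Qed.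

Lemma G_neq0_other N ps r s s' z : (0 < N)%N -> r s != r s' ->
  G (aa N ps r s - aa N ps r s') z != 0.
Proof.
move=> hN hr; apply/eqP => h.
set S1 := (\sum_(1 <= k < s.+1) ps k)%N.
set S2 := (\sum_(1 <= k < s'.+1) ps k)%N.
pose a : int := - (z - S1%:Z + S2%:Z).
pose b : int := a - N%:Z * (r s - r s').
have : a%:~R * eps1 + b%:~R * eps2 = 0.
  rewrite -h /G /aa /tpar /hbar' /b /a -/S1 -/S2; ring.
move/eps_indep => [ha hb].
have hm : N%:Z * (r s - r s') = 0 by rewrite /b ha in hb; lia.
move/eqP: hm; rewrite mulf_eq0 => /orP[]; first by lia.
by rewrite subr_eq0 (negbTE hr).
Qed.

Lemma caseI_same D (p i : nat) (Fn Fd : nat -> K) : D = 0 -> (1 <= p <= i)%N ->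
 (forall j, (1 <= j < i.+2)%N -> Fn j = G D (p%:Z - j%:Z + (if (j <= p)%N then 1 else 0))) ->
 (forall j, (1 <= j < i.+1)%N -> j != p -> Fd j = G D (p%:Z - j%:Z + (if (j <= p.-1)%N then 1 else 0))) ->
 (\prod_(1 <= j < i.+2) Fn j) / (\prod_(1 <= j < i.+1 | j != p) Fd j) = hbar' ^+ 2 * (p%:R - i%:R - 1).
Proof.
move=> hD hp hFn hFd.
have hG0 : forall z, G D z = hbar' * z%:~R by move=> z; rewrite /G hD subr0.
rewrite (prod_piece _ _ _ _ _ p _ hFn); last by lia.
rewrite big_mkcond (@big_cat_nat _ _ _ p) /=; [ | lia | lia].
rewrite (@big_ltn _ _ _ p i.+1); last by lia.
rewrite eqxx /=.
rewrite (prod_one _ D (p%:Z + 1)); last first.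
  move=> j hj; rewrite ifT; last by lia.
  rewrite hFd; [ | lia | lia]. rewrite ifT; last by lia.
  congr G; lia.
rewrite (prod_one _ D p%:Z); last first.
  move=> j hj; rewrite ifT; last by lia.
  rewrite hFd; [ | lia | lia]. rewrite ifF; last by lia.
  congr G; lia.
have hden : A D (p%:Z + 1) 1 p * (1 * A D p%:Z p.+1 i.+1) != 0.
  rewrite mul1r mulf_neq0 //; apply: A_neq0 => j hj; apply: G0_neq0 => //; lia.
apply: ratio; first exact: hden.
rewrite (A_recr _ _ 1 p); last by lia.
rewrite (A_recr _ _ p.+1 i.+1); last by lia.
have e1 : p%:Z + 1 - p%:Z = 1 by lia.
rewrite e1 (hG0 1) (hG0 (p%:Z - (i.+1)%:Z)).
ring.
Qed.

Lemma caseII_same D (p i : nat) (Fn Fd : nat -> K) : D = 0 -> (1 <= p <= i)%N ->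
 (forall j, (1 <= j < i)%N -> Fn j = G D (p%:Z - 1 - j%:Z + (if (j <= p.-1)%N then 1 else 0))) ->
 (forall j, (1 <= j < i.+1)%N -> j != p -> Fd j = G D (p%:Z - 1 - j%:Z + (if (j <= p)%N then 1 else 0))) ->
 (\prod_(1 <= j < i) Fn j) / (\prod_(1 <= j < i.+1 | j != p) Fd j) = - (1 / (p%:R - i%:R - 1)).
Proof.
move=> hD hp hFn hFd.
have hG0 : forall z, G D z = hbar' * z%:~R by move=> z; rewrite /G hD subr0.
rewrite (prod_piece _ _ _ _ _ p.-1 _ hFn); last by lia.
have hp1 : p.-1.+1 = p by lia.
have e0 : p%:Z - 1 + 1 = p%:Z by lia.
rewrite hp1 e0.
rewrite big_mkcond (@big_cat_nat _ _ _ p) /=; [ | lia | lia].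
rewrite (@big_ltn _ _ _ p i.+1); last by lia.
rewrite eqxx /=.
rewrite (prod_one _ D p%:Z); last first.
  move=> j hj; rewrite ifT; last by lia.
  rewrite hFd; [ | lia | lia]. rewrite ifT; last by lia.
  congr G; lia.
rewrite (prod_one _ D (p%:Z - 1)); last first.
  move=> j hj; rewrite ifT; last by lia.
  rewrite hFd; [ | lia | lia]. rewrite ifF; last by lia.
  congr G; lia.
have hden : A D p%:Z 1 p * (1 * A D (p%:Z - 1) p.+1 i.+1) != 0.
  rewrite mul1r mulf_neq0 //; apply: A_neq0 => j hj; apply: G0_neq0 => //; lia.
have hY : G D (p%:Z - 1 - i%:Z) != 0 by apply: G0_neq0 => //; lia.
rewrite (@ratio2 _ _ (G D (-1)) _ hden hY); last first.
  rewrite -mulrA -(A_recr _ _ p i); last by lia.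
  rewrite (A_recl _ _ p i.+1); last by lia.
  have e1 : p%:Z - 1 - p%:Z = -1 by lia.
  rewrite e1; ring.
have hpi : (p%:R - i%:R - 1 : K) != 0.
  have -> : (p%:R - i%:R - 1 : K) = (p%:Z - i%:Z - 1)%:~R by ring.
  apply: intrK_neq0; lia.
rewrite (hG0 (-1)) (hG0 (p%:Z - 1 - i%:Z)).
have -> : ((p%:Z - 1 - i%:Z)%:~R : K) = p%:R - i%:R - 1 by ring.
have hb := hbar_neq0.
rewrite -mulf_div (divff hb) mul1r.
have -> : (((-1 : int))%:~R : K) = -1 by ring.
by rewrite mulNr.
Qed.
Lemma ent_shift L s i p d s' i' p' : (1 <= p' <= i')%N ->
  ent (shift L s i p d) s' i' p' =
  if [&& s' == s, i' == i & p' == p] then ent L s' i' p' + d else ent L s' i' p'.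
Proof. by rewrite /ent /shift => ->. Qed.

Lemma e01 N l ps L (HL : inS N l ps L) s (Hs : (1 <= s <= l)%N) i p :
  (1 <= i <= N)%N -> (1 <= p <= i)%N -> ent L s i p = 0 \/ ent L s i p = 1.
Proof.
move=> hi hp.
suff H : forall k, (k < N)%N -> forall p, (1 <= p <= N - k)%N -> ent L s (N - k) p = 0 \/ ent L s (N - k) p = 1.
  have -> : i = (N - (N - i))%N by lia.
  apply: H; lia.
elim=> [|k IH] hk q hq.
  rewrite subn0 (HL s Hs).1; last by lia.
  by case: ifP => _; [right | left].
have [h1 h2] := (HL s Hs).2 (N - k)%N q ltac:(lia) ltac:(lia).
have e : (N - k.+1 = (N - k).-1)%N by lia.
rewrite e.
have := IH ltac:(lia) q ltac:(lia).
have := IH ltac:(lia) q.+1 ltac:(lia).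
lia.
Qed.

Lemma mono N l ps L (HL : inS N l ps L) s (Hs : (1 <= s <= l)%N) i p :
  (1 <= i <= N)%N -> (1 <= p < i)%N -> ent L s i p.+1 <= ent L s i p.
Proof.
move=> hi hp.
have [eN|ltN] : i = N \/ (i < N)%N by lia.
  subst i; rewrite !(HL s Hs).1; [ | lia | lia].
  case: ifP; case: ifP => //; lia.
have [h1 h2] := (HL s Hs).2 i.+1 p ltac:(lia) ltac:(lia).
have [h3 h4] := (HL s Hs).2 i.+1 p.+1 ltac:(lia) ltac:(lia).
simpl in *; lia.
Qed.

Lemma step01 (f : nat -> int) i :
  (forall p, (1 <= p <= i)%N -> f p = 0 \/ f p = 1) ->
  (forall p, (1 <= p < i)%N -> f p.+1 <= f p) ->
  exists m, (m <= i)%N /\ forall p, (1 <= p <= i)%N -> f p = if (p <= m)%N then 1 else 0.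
Proof.
elim: i => [|i IH] h01 hmono.
  by exists 0%N; split => // p; lia.
have [m [hm hf]] := IH (fun p hp => h01 p ltac:(lia)) (fun p hp => hmono p ltac:(lia)).
have [h0|h1] := h01 i.+1 ltac:(lia).
  exists m; split; first lia.
  move=> p hp; have [ep|lp] : p = i.+1 \/ (p <= i)%N by lia.
    by subst p; rewrite h0 ifF //; lia.
  apply: hf; lia.
have em : m = i.
  have [i0|ipos] : i = 0%N \/ (1 <= i)%N by lia.
    by subst i; lia.
  have := hmono i ltac:(lia); rewrite h1 (hf i); last by lia.
  case: ifP; lia.
subst m.
exists i.+1; split => // p hp.
have [ep|lp] : p = i.+1 \/ (p <= i)%N by lia.
  by subst p; rewrite h1 leqnn.
rewrite hf; last by lia. by rewrite !ifT //; lia.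
Qed.

Lemma lcnt_form L s i m : (m <= i)%N ->
  (forall p, (1 <= p <= i)%N -> ent L s i p = if (p <= m)%N then 1 else 0) ->
  lcnt L s i = m.
Proof.
move=> hm hf; rewrite /lcnt.
rewrite (@big_cat_nat _ _ _ m.+1) /=; [ | lia | lia].
rewrite (eq_big_nat _ _ (F2 := fun _ => 1%N)); last first.
  by move=> p hp; rewrite hf ?ifT //; lia.
rewrite [X in (_ + X)%N](eq_big_nat _ _ (F2 := fun _ => 0%N)); last first.
  by move=> p hp; rewrite hf ?ifF //; lia.
rewrite !sum_nat_const_nat; lia.
Qed.

Lemma row_form N l ps L (HL : inS N l ps L) s (Hs : (1 <= s <= l)%N) i :
  (i <= N)%N -> exists m, [/\ (m <= i)%N,
    forall p, (1 <= p <= i)%N -> ent L s i p = if (p <= m)%N then 1 else 0 &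
    lcnt L s i = m].
Proof.
move=> hi.
have [i0|ipos] : i = 0%N \/ (1 <= i)%N by lia.
  subst i; exists 0%N; split => //; first by move=> p; lia.
  by rewrite /lcnt big_geq.
have hi1 : (1 <= i <= N)%N by lia.
have [m [hm hf]] := @step01 (ent L s i) i (fun p hp => @e01 N l ps L HL s Hs i p hi1 hp)
   (fun p hp => @mono N l ps L HL s Hs i p hi1 hp).
exists m; split => //.
exact: lcnt_form.
Qed.

Lemma rinc l (r : nat -> int) (Hr : forall s, (1 <= s)%N -> (s < l)%N -> r s < r s.+1) :
  forall a b, (1 <= a)%N -> (a < b)%N -> (b <= l)%N -> r a < r b.
Proof.
move=> a b ha hab hb.
have [k hk] : exists k, b = (a + k.+1)%N by exists (b - a.+1)%N; lia.
subst b; clear hab.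
elim: k hb => [|k IH] hb.
  by rewrite addn1; apply: Hr; lia.
have h1 : (a + k.+1 <= l)%N by lia.
have h2 : (1 <= a + k.+1)%N by lia.
have h3 : (a + k.+1 < l)%N by lia.
have := IH h1.
have := Hr (a + k.+1)%N h2 h3.
have -> : (a + k.+2 = (a + k.+1).+1)%N by lia.
lia.
Qed.

Lemma rneq l (r : nat -> int) (Hr : forall s, (1 <= s)%N -> (s < l)%N -> r s < r s.+1) s s' :
  (1 <= s <= l)%N -> (1 <= s' <= l)%N -> s' != s -> r s != r s'.
Proof.
move=> hs hs' hne.
have [lt|gt] : (s < s')%N \/ (s' < s)%N by lia.
  have := @rinc l r Hr s s' ltac:(lia) lt ltac:(lia); lia.
have := @rinc l r Hr s' s ltac:(lia) gt ltac:(lia); lia.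
Qed.

Lemma Lplus_G N ps r L s i p s' j :
  Lplus N ps r L s i p s' j = G (aa N ps r s - aa N ps r s') (p%:Z - j%:Z + ent L s' i.+1 j).
Proof. rewrite /Lplus /G; ring. Qed.

Lemma Lminus_G N ps r L s i p s' j :
  Lminus N ps r L s i p s' j = G (aa N ps r s - aa N ps r s') (p%:Z - 1 - j%:Z + ent L s' i.-1 j).
Proof. rewrite /Lminus /G; ring. Qed.

Lemma nu_G N ps r L s i p s' j :
  nu N ps r L s i p - nu N ps r L s' i j =
  G (aa N ps r s - aa N ps r s') (p%:Z - j%:Z - ent L s i p + ent L s' i j).
Proof. rewrite /nu /G; ring. Qed.

Theorem lemma3p2 (N l : nat) (ps : nat -> nat) (r : nat -> int)
  (HN : (2 <= N)%N) (Hl : (1 <= l)%N)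
  (Hps : forall s, (1 <= s <= l)%N -> (1 <= ps s <= N)%N)
  (Hr : forall s, (1 <= s)%N -> (s < l)%N -> r s < r s.+1)
  (L : pattern) (HL : inS N l ps L)
  (i : nat) (Hi : (1 <= i <= N - 1)%N)
  (s p : nat) (Hs : (1 <= s <= l)%N) (Hp : (1 <= p <= i)%N) :
  (* (i) (s,p) \in R_{Lambda,i} *)
  (inS N l ps (shift L s i p 1) ->
     (\prod_(1 <= p' < i.+2) Lplus N ps r L s i p s p')
       / (\prod_(1 <= p' < i.+1 | p' != p) (nu N ps r L s i p - nu N ps r L s i p'))
       = hbar' ^+ 2 * (p%:R - i%:R - 1)
   /\ forall s', (1 <= s' <= l)%N -> s' != s ->
     let D := aa N ps r s - aa N ps r s' in
     let lhs := (\prod_(1 <= p' < i.+2) Lplus N ps r L s i p s' p')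
       / (\prod_(1 <= p' < i.+1) (nu N ps r L s i p - nu N ps r L s' i p')) in
     let li := lcnt L s' i in
     [/\ lcnt L s' i.+1 = li -> lhs = hbar' * (p%:R - i%:R - 1) - D,
         lcnt L s' i.+1 = li.+1 -> li = i -> lhs = hbar' * (p%:R - i%:R) - D &
         lcnt L s' i.+1 = li.+1 -> li <> i ->
           lhs = (hbar' * (p%:R - li%:R) - D) * (hbar' * (p%:R - i%:R - 1) - D)
                 / (hbar' * (p%:R - li%:R - 1) - D)])
  /\
  (* (ii) (s,p) \in A_{Lambda,i} *)
  (inS N l ps (shift L s i p (-1)) ->
     (\prod_(1 <= p' < i) Lminus N ps r L s i p s p')
       / (\prod_(1 <= p' < i.+1 | p' != p) (nu N ps r L s i p - nu N ps r L s i p'))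
       = - (1 / (p%:R - i%:R - 1))
   /\ forall s', (1 <= s' <= l)%N -> s' != s ->
     let D := aa N ps r s - aa N ps r s' in
     let lhs := (\prod_(1 <= p' < i) Lminus N ps r L s i p s' p')
       / (\prod_(1 <= p' < i.+1) (nu N ps r L s i p - nu N ps r L s' i p')) in
     let li := lcnt L s' i in
     [/\ lcnt L s' i.-1 = li -> lhs = 1 / (hbar' * (p%:R - i%:R - 1) - D),
         lcnt L s' i.-1 = li.-1 -> (1 <= li)%N -> li = i ->
           lhs = 1 / (hbar' * (p%:R - i%:R) - D) &
         lcnt L s' i.-1 = li.-1 -> (1 <= li)%N -> li <> i ->
           lhs = (hbar' * (p%:R - li%:R - 1) - D)
                 / ((hbar' * (p%:R - li%:R) - D) * (hbar' * (p%:R - i%:R - 1) - D))]).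
Proof.
have hN0 : (0 < N)%N by lia.
have hiN : (1 <= i <= N)%N by lia.
have hG : forall s', (1 <= s' <= l)%N -> s' != s -> forall z, G (aa N ps r s - aa N ps r s') z != 0.
  move=> s' hs' hne z; apply: G_neq0_other => //; exact: (@rneq l r Hr s s').
have hGeq : forall (D : K) (z : int) (x : K), z%:~R = x -> G D z = hbar' * x - D.
  by move=> D z x <-.
split.
- move=> Hsh.
  have e0 : ent L s i p = 0.
    have := @e01 N l ps L HL s Hs i p hiN Hp.
    have := @e01 N l ps _ Hsh s Hs i p hiN Hp.
    rewrite ent_shift // !eqxx /=; lia.
  split.
  + have [m [hm hfm hlm]] := @row_form N l ps L HL s Hs i ltac:(lia).
    have [n [hn hfn hln]] := @row_form N l ps L HL s Hs i.+1 ltac:(lia).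
    have hmp : (m < p)%N by move: (hfm p Hp); rewrite e0; case: ifP => //; lia.
    have hpm : (p.-1 <= m)%N.
      have [p1|p2] : p = 1%N \/ (2 <= p)%N by lia.
        by subst p.
      have := @mono N l ps _ Hsh s Hs i p.-1 hiN ltac:(lia).
      rewrite prednK; last by lia.
      rewrite ent_shift // !eqxx /= e0 ent_shift; last by lia.
      have -> : [&& s == s, i == i & p.-1 == p] = false by apply/negbTE; rewrite negb_and; apply/orP; right; rewrite negb_and; apply/orP; right; apply/eqP; lia.
      rewrite hfm; last by lia.
      case: ifP; lia.
    have hnp : n = p.
      have [h1 _] := (Hsh s Hs).2 i.+1 p ltac:(lia) ltac:(lia).
      have [_ h2] := (HL s Hs).2 i.+1 p ltac:(lia) ltac:(lia).
      move: h1 h2 => /=; rewrite ent_shift // !eqxx /= e0 ent_shift; last by lia.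
      have -> : [&& s == s, i.+1 == i & p == p] = false by apply/negbTE; rewrite negb_and; apply/orP; right; rewrite negb_and; apply/orP; left; apply/eqP; lia.
      rewrite ?e0 !hfn; [ | lia | lia].
      case: ifP; case: ifP; lia.
    apply: (@caseI_same (aa N ps r s - aa N ps r s)); [by rewrite subrr | exact: Hp | | ].
    * move=> j hj; rewrite Lplus_G hfn; last by lia.
      by rewrite hnp.
    * move=> j hj hjp; rewrite nu_G e0 hfm; last by lia.
      have -> : m = p.-1 by lia.
      congr G; lia.
  + move=> s' hs' hne D lhs li.
    have [m [hm hfm hlm]] := @row_form N l ps L HL s' hs' i ltac:(lia).
    have [n [hn hfn hln]] := @row_form N l ps L HL s' hs' i.+1 ltac:(lia).
    have := @caseI_other D p i n m (Lplus N ps r L s i p s') (fun j => nu N ps r L s i p - nu N ps r L s' i j)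
      (hG s' hs' hne) hm hn.
    case.
    * by move=> j hj; rewrite Lplus_G hfn //; lia.
    * move=> j hj; rewrite nu_G e0 hfm; last by lia.
      congr G; lia.
    move=> c1 c2 c3.
    rewrite /lhs /li hlm hln.
    split.
    * move=> h; rewrite c1 // /G; congr (_ - _); rewrite /D; ring.
    * move=> h1 h2; rewrite c2 // /G; congr (_ - _); rewrite /D; ring.
    * move=> h1 h2; rewrite c3 //; congr (_ * _ / _); rewrite /G /D; ring.
- move=> Hsh.
  have e1 : ent L s i p = 1.
    have := @e01 N l ps L HL s Hs i p hiN Hp.
    have := @e01 N l ps _ Hsh s Hs i p hiN Hp.
    rewrite ent_shift // !eqxx /=; lia.
  split.
  + have [m [hm hfm hlm]] := @row_form N l ps L HL s Hs i ltac:(lia).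
    have [n [hn hfn hln]] := @row_form N l ps L HL s Hs i.-1 ltac:(lia).
    have hpm : (p <= m)%N by move: (hfm p Hp); rewrite e1; case: ifP => //; lia.
    have hmp : m = p.
      have [pe|pl] : p = i \/ (p < i)%N by lia.
        lia.
      have := @mono N l ps _ Hsh s Hs i p hiN ltac:(lia).
      rewrite (@ent_shift L s i p (-1) s i p) // (@ent_shift L s i p (-1) s i p.+1); last by lia.
      rewrite !eqxx /= e1.
      have -> : (p.+1 == p) = false by apply/eqP; lia.
      rewrite hfm; last by lia.
      case: ifP; lia.
    have hnp : n = p.-1.
      have [i1|i2] : i = 1%N \/ (2 <= i)%N by lia.
        subst i; simpl in hn; lia.
      have hle : (n <= p.-1)%N.
        have [pe|pl] : p = i \/ (p < i)%N by lia.
          lia.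
        have [h1 _] := (Hsh s Hs).2 i p ltac:(lia) ltac:(lia).
        move: h1; rewrite (@ent_shift L s i p (-1) s i p) // (@ent_shift L s i p (-1) s i.-1 p); last by lia.
        have -> : (i.-1 == i) = false by apply/eqP; lia.
        rewrite !eqxx /= e1.
        rewrite hfn; last by lia.
        case: ifP; lia.
      have hge : (p.-1 <= n)%N.
        have [p1|p2] : p = 1%N \/ (2 <= p)%N by lia.
          by rewrite p1.
        have [_ h2] := (HL s Hs).2 i p.-1 ltac:(lia) ltac:(lia).
        move: h2; rewrite prednK; last by lia.
        rewrite e1 hfn; last by lia.
        case: ifP; lia.
      lia.
    apply: (@caseII_same (aa N ps r s - aa N ps r s)); [by rewrite subrr | exact: Hp | | ].
    * move=> j hj; rewrite Lminus_G hfn; last by lia.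
      by rewrite hnp.
    * move=> j hj hjp; rewrite nu_G e1 hfm; last by lia.
      rewrite hmp.
      congr G; lia.
  + move=> s' hs' hne D lhs li.
    have [m [hm hfm hlm]] := @row_form N l ps L HL s' hs' i ltac:(lia).
    have [n [hn hfn hln]] := @row_form N l ps L HL s' hs' i.-1 ltac:(lia).
    have := @caseII_other D p i n m (Lminus N ps r L s i p s') (fun j => nu N ps r L s i p - nu N ps r L s' i j)
      (hG s' hs' hne) hm ltac:(lia).
    case.
    * by move=> j hj; rewrite Lminus_G hfn //; lia.
    * move=> j hj; rewrite nu_G e1 hfm; last by lia.
      congr G; lia.
    move=> c1 c2 c3.
    rewrite /lhs /li hlm hln.
    split.
    * move=> h; rewrite c1 // /G /D; congr (_ / _); ring.
    * move=> h1 h2 h3; rewrite c2 // /G /D; congr (_ / _); ring.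
    * move=> h1 h2 h3; rewrite c3 //; congr (_ / (_ * _)); rewrite /G /D; ring.
Qed.
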